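(* For all $n\geq 1$, \[\bar{a}_2(n)=2\bar{p}(n)-\bar{p}(n+1)+\bar{u}(n+1),\] where $\bar{u}(N)$ is the number of overpartitions of $N$ such that: (1) $1$ is not a part; (2) the smallest part is overlined and no other part has the same value; (3) the values of the largest and second largest parts are either equal, or consecutive with the second largest part overlined.
   Context: An overpartition of $n$ is a partition of $n$ in which the first occurrence of each distinct part value may be overlined. $\bar{p}(n)$ is the number of overpartitions of $n$. $\bar{a}_m(n)$ is the number of overpartitions of $n$ in which the smallest part value occurs at least $m$ times, where an overlined part and a non-overlined part of the same value are counted as equal (e.g. $\bar{1}+1$ has smallest part $1$ occurring twice). *)

(* Defs.v *)
From mathcomp Require Import all_boot all_algebra.
Set Implicit Arguments. Unset Strict Implicit. Unset Printing Implicit Defensive.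

(** An overpartition is represented canonically as a list of parts
    [(value, overlined)], listed in nonincreasing order of value, where among
    the parts of equal value only the first one (the first occurrence) may be
    overlined. *)
Definition ov_rel (x y : nat * bool) : bool :=
  (y.1 < x.1) || ((x.1 == y.1) && ~~ y.2).

Definition is_overpartition (n : nat) (s : seq (nat * bool)) : bool :=
  [&& sorted ov_rel s, all (fun p => 0 < p.1) s & sumn [seq p.1 | p <- s] == n].

(** A finite superset of all overpartitions of n: lists of length <= n with
    entries in {1..n} x bool. *)
Definition alphabet (n : nat) : seq (nat * bool) :=
  [seq (v, b) | v <- iota 1 n, b <- [:: false; true]].

Fixpoint seqs_upto {T : Type} (A : seq T) (k : nat) : seq (seq T) :=
  [::] :: (if k is k'.+1 then [seq a :: s | a <- A, s <- seqs_upto A k'] else [::]).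

Definition overpartitions (n : nat) : seq (seq (nat * bool)) :=
  [seq s <- undup (seqs_upto (alphabet n) n) | is_overpartition n s].

Definition pbar (n : nat) : nat := size (overpartitions n).

(** smallest part value (the list is nonincreasing, so it is the last one) *)
Definition smallest_value (s : seq (nat * bool)) : nat := last 0 [seq p.1 | p <- s].

Definition mult_smallest (s : seq (nat * bool)) : nat :=
  count (fun p => p.1 == smallest_value s) s.

Definition abar (m n : nat) : nat :=
  count (fun s => m <= mult_smallest s) (overpartitions n).

Definition ubar_cond (s : seq (nat * bool)) : bool :=
  [&& (1, false) \notin s,
      (last (0, false) s).2 && (mult_smallest s == 1) &
      match s with
      | x :: y :: _ => (x.1 == y.1) || ((x.1 == y.1.+1) && y.2)
      | _ => false
      end].

Definition ubar (N : nat) : nat := count ubar_cond (overpartitions N).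

(* Main.v *)
Require Import Defs.
From mathcomp Require Import all_boot all_algebra.
From mathcomp Require Import zify.

Set Warnings "-notation-overridden -ambiguous-paths".
Set Implicit Arguments. Unset Strict Implicit.

Notation ov := is_overpartition.
Notation ovs := overpartitions.

Lemma mem_seqs_upto (T : eqType) (A : seq T) k s :
  size s <= k -> all (mem A) s -> s \in seqs_upto A k.
Proof.
elim: k s => [|k IH] [|a s] //= Hs /andP [Ha Has].
rewrite inE; apply/orP; right.
by apply: (allpairs_f (fun a s => a :: s)) => //; apply: IH.
Qed.

Lemma sumn_ge_size (s : seq (nat * bool)) :
  all (fun p => 0 < p.1) s -> size s <= sumn [seq p.1 | p <- s].
Proof. elim: s => //= x s IH /andP [Hx Hs]; have := IH Hs; lia. Qed.

Lemma part_le_sum {s : seq (nat * bool)} {p} :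
  p \in s -> p.1 <= sumn [seq p.1 | p <- s].
Proof.
elim: s => //= x s IH; rewrite inE => /orP [/eqP -> | Hp]; first lia.
have := IH Hp; lia.
Qed.

Lemma ovP n s : (s \in ovs n) = ov n s.
Proof.
rewrite /overpartitions mem_filter andb_idr // => Hs.
rewrite mem_undup; move: Hs => /and3P [_ Hpos /eqP Hsum].
apply: mem_seqs_upto; first by rewrite -Hsum sumn_ge_size.
apply/allP => [[v b]] Hp /=.
have Hv := part_le_sum Hp; have /allP /(_ _ Hp) /= Hv1 := Hpos.
apply: (allpairs_f (fun v b => (v, b))); last by case: (b).
move: Hv; rewrite Hsum mem_iota /=; lia.
Qed.

Lemma ovs_uniq n : uniq (ovs n).
Proof. by rewrite filter_uniq // undup_uniq. Qed.

Lemma count_inj_le n m (P Q : pred (seq (nat * bool))) f g :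
  (forall s, ov n s -> P s -> [/\ ov m (f s), Q (f s) & g (f s) = s]) ->
  count P (ovs n) <= count Q (ovs m).
Proof.
move=> H; rewrite -!size_filter -(size_map f).
apply: uniq_leq_size.
  rewrite map_inj_in_uniq; first exact: filter_uniq (ovs_uniq n).
  move=> x y; rewrite !mem_filter => /and3P [Px Ox _] /and3P [Py Oy _] Exy.
  have [_ _ <-] := H x Ox Px; have [_ _ <-] := H y Oy Py; by rewrite Exy.
move=> y /mapP [x]; rewrite mem_filter ovP => /andP [Px Ox] ->.
have [O1 Q1 _] := H x Ox Px; by rewrite mem_filter ovP Q1 O1.
Qed.

Lemma count_bij n m (P Q : pred (seq (nat * bool))) f g :
  (forall s, ov n s -> P s -> [/\ ov m (f s), Q (f s) & g (f s) = s]) ->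
  (forall s, ov m s -> Q s -> [/\ ov n (g s), P (g s) & f (g s) = s]) ->
  count P (ovs n) = count Q (ovs m).
Proof.
move=> H1 H2; apply/eqP; rewrite eqn_leq.
by rewrite (@count_inj_le n m P Q f g H1) (@count_inj_le m n Q P g f H2).
Qed.

Lemma count_split (T : Type) (a b : pred T) s :
  count a s = count (fun x => a x && b x) s + count (fun x => a x && ~~ b x) s.
Proof. elim: s => //= x s ->; case: (a x); case: (b x) => /=; lia. Qed.

Definition lastb (s : seq (nat * bool)) := (last (0, false) s).2.
Definition lastv (s : seq (nat * bool)) := (last (0, false) s).1.
Definition cond3 (s : seq (nat * bool)) : bool :=
  match s with
  | x :: y :: _ => (x.1 == y.1) || ((x.1 == y.1.+1) && y.2)
  | _ => false
  end.

Fixpoint modlast (h : nat * bool -> nat * bool) (s : seq (nat * bool)) :=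
  match s with
  | [::] => [::]
  | x :: s' => if s' is [::] then [:: h x] else x :: modlast h s'
  end.

Lemma modlast_rcons h s z : modlast h (rcons s z) = rcons s (h z).
Proof. elim: s => //= x s IH; rewrite IH; by case: s IH. Qed.

Definition hmap (h : nat * bool -> nat * bool) (s : seq (nat * bool)) :=
  if s is x :: s' then h x :: s' else s.

Lemma ov_rcons n s z : ov n (rcons s z) =
  [&& (if s is x :: s' then path ov_rel x s' && ov_rel (last x s') z else true),
      all (fun p => 0 < p.1) s, 0 < z.1 & sumn [seq p.1 | p <- s] + z.1 == n].
Proof.
rewrite /is_overpartition map_rcons sumn_rcons all_rcons.
case: s => [|x s] /=; first by rewrite andbT.
rewrite rcons_path; case: (0 < z.1) => /=; by rewrite ?andbF.
Qed.

Lemma ov_cons n x s : ov n (x :: s) =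
  [&& path ov_rel x s, 0 < x.1, all (fun p => 0 < p.1) s & x.1 + sumn [seq p.1 | p <- s] == n].
Proof. by rewrite /is_overpartition /=; case: (0 < x.1) => /=; rewrite ?andbF. Qed.

Lemma all_ge x s : path ov_rel x s -> all (fun p => (last x s).1 <= p.1) (x :: s).
Proof.
elim: s x => [|y s IH] x /=; first by rewrite leqnn.
move=> /andP [Hxy Hp]; have := IH y Hp => /= /andP [H1 ->]; rewrite H1 andbT.
move: Hxy; rewrite /ov_rel; case: (y.2) => /=; lia.
Qed.

Lemma ms_rcons s z : mult_smallest (rcons s z) = (count (fun p => p.1 == z.1) s).+1.
Proof.
rewrite /mult_smallest /smallest_value map_rcons last_rcons -cats1 count_cat /=.
by rewrite eqxx addn1.
Qed.

Lemma lastb_rcons s z : lastb (rcons s z) = z.2.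
Proof. by rewrite /lastb last_rcons. Qed.
Lemma lastv_rcons s z : lastv (rcons s z) = z.1.
Proof. by rewrite /lastv last_rcons. Qed.

Lemma ov_bar_gt n s z : ov n (rcons s z) -> z.2 -> forall p, p \in s -> z.1 < p.1.
Proof.
rewrite ov_rcons; case: s => [|x s] //= /andP [/andP [Hp Hl] _] Hz p Hin.
have /allP /(_ p Hin) /= := all_ge Hp.
move: Hl; rewrite /ov_rel Hz /=; lia.
Qed.

Lemma ms_one_of_bar n s : ov n s -> lastb s -> mult_smallest s == 1.
Proof.
case: (lastP s) => [|s' z] // Ho; rewrite lastb_rcons => Hz.
rewrite ms_rcons eqSS -leqn0 leqNgt -has_count; apply/hasPn => p Hp /=.
by move: (ov_bar_gt Ho Hz Hp) => /gtn_eqF ->.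
Qed.

Lemma no_plain1_of_bar n s : ov n s -> lastb s -> (1, false) \notin s.
Proof.
case: (lastP s) => [|s' z] // Ho; rewrite lastb_rcons => Hz.
rewrite -cats1 mem_cat inE negb_or; apply/andP; split.
  apply/negP => Hp; have := ov_bar_gt Ho Hz Hp.
  move: Ho; rewrite ov_rcons => /and4P [_ _ ? _] /=; lia.
by apply/eqP => Ez; rewrite -Ez in Hz.
Qed.

Lemma ms_pos n s : 0 < n -> ov n s -> 0 < mult_smallest s.
Proof. by case: (lastP s) => [|s' z]; [rewrite /is_overpartition /=; lia | rewrite ms_rcons]. Qed.

Definition togl := modlast (fun p : nat * bool => (p.1, ~~ p.2)).

Lemma tog_bij n :
  count (fun s => (mult_smallest s == 1) && ~~ lastb s) (ovs n) = count lastb (ovs n).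
Proof.
apply: (@count_bij n n _ _ togl togl) => s.
- case: (lastP s) => [|s' z] //.
  rewrite /togl modlast_rcons ms_rcons !lastb_rcons !ov_rcons /= ?negbK eqSS.
  move=> /and4P [H1 H2 H3 H4] /andP [Hc Hz]; split => //; last by rewrite modlast_rcons /= negbK; case: (z).
  move: Hc; rewrite -leqn0 leqNgt -has_count => /hasPn Hc.
  rewrite H2 H3 H4 !andbT; case: s' H1 Hc {H2 H4} => [|x s'] //= /andP [-> Hl] Hc.
  move: (Hc _ (mem_last x s')).
  move: Hl Hz; rewrite /ov_rel; case: (z) => v [] //=; case: (last x s') => a b /=.
  case: b => /=; lia.
- case: (lastP s) => [|s' z] // Ho.
  have Hms := ms_one_of_bar Ho; rewrite lastb_rcons in Hms * => Hz.
  move: Hms Ho; rewrite /togl modlast_rcons !ms_rcons !lastb_rcons !ov_rcons /= Hz /=.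
  move=> /(_ isT) -> /and4P [H1 H2 H3 H4]; split => //; last by rewrite modlast_rcons; case: (z) Hz => ? [].
  rewrite H2 H3 H4 !andbT; case: s' H1 {H2 H4} => [|x s'] //= /andP [-> Hl].
  move: Hl Hz; rewrite /ov_rel; case: (z) => v [] //=; case: (last x s') => a b /=.
  case: b => /=; lia.
Qed.

Definition incp (p : nat * bool) := (p.1.+1, p.2).
Definition decp (p : nat * bool) := (p.1.-1, p.2).

Lemma head_bij N : 0 < N ->
  count (fun s => ~~ cond3 s && lastb s) (ovs N.+1) = count lastb (ovs N).
Proof.
move=> HN; symmetry; apply: (@count_bij N N.+1 _ _ (hmap incp) (hmap decp)) => s.
- case: s => [|[a b] [|[c d] s]] //.
  + rewrite !ov_cons /lastb /= => /andP [H1 /eqP H2] Hb; split => //; apply/eqP; lia.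
  + rewrite !ov_cons /lastb /= => /and4P [/andP [H0 ->] H1 /andP [-> ->] /eqP H4] ->.
    split => //; move: H0; rewrite /ov_rel /incp /=; case: (d) => /=; lia.
- case: s => [|[a b] [|[c d] s]] //.
  + rewrite !ov_cons /lastb /= => /andP [H1 /eqP H2] Hb; split => //.
      apply/andP; split; [|apply/eqP]; lia.
    by rewrite /incp /decp /= prednK.
  + rewrite !ov_cons /lastb /= => /and4P [/andP [H0 ->] H1 /andP [H2 ->] /eqP H4] /andP [Hc ->].
    split => //.
      move: H0 Hc; rewrite /ov_rel /decp /=; case: (d) => /=; lia.
    by rewrite /incp /decp /= prednK.
Qed.

Lemma last_pos n x s : ov n (x :: s) -> 0 < (last x s).1.
Proof.
move=> /and3P [_ /allP Ha _]; exact: (Ha _ (mem_last x s)).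
Qed.

Definition droplast (s : seq (nat * bool)) := take (size s).-1 s.

Lemma droplast_rcons s z : droplast (rcons s z) = s.
Proof. by rewrite /droplast size_rcons /= -cats1 take_size_cat. Qed.

Lemma plain_bij n :
  count (fun s => ~~ lastb s && (lastv s == 1)) (ovs n.+1) = count predT (ovs n).
Proof.
symmetry; apply: (@count_bij n n.+1 _ _ (fun t => rcons t (1, false)) droplast) => s.
- move=> Ho _; rewrite lastb_rcons lastv_rcons droplast_rcons; split => //.
  case: s Ho => [|x s] Ho.
    by move: Ho; rewrite /is_overpartition /= => /eqP <-.
  have Hl := last_pos Ho; move: Ho; rewrite ov_rcons ov_cons.
  move=> /and4P [Hp Hx Ha /eqP Hs] /=; rewrite Hp Hx Ha /=; apply/andP; split.
    by move: Hl; rewrite /ov_rel; case: (last x s) => a b /=; lia.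
  apply/eqP; lia.
- case: (lastP s) => [|s' [v b]] //.
  rewrite lastb_rcons lastv_rcons droplast_rcons /= => Ho /andP [Hb /eqP Hv].
  subst v; move: Hb Ho; case: b => // _ Ho; split => //.
  move: Ho; rewrite ov_rcons /is_overpartition; case: s' => [|x s'] /=.
    by move=> /eqP H; apply/eqP; lia.
  move=> /and3P [/andP [-> _] -> /eqP H] /=; apply/eqP; lia.
Qed.

Lemma bar_bij n :
  count (fun s => ~~ lastb s && (lastv s != 1)) (ovs n.+1) = count lastb (ovs n).
Proof.
apply: (@count_bij n.+1 n _ _ (modlast (fun p => (p.1.-1, true)))
                              (modlast (fun p => (p.1.+1, false)))) => s.
- case: (lastP s) => [|s' [v b]] //.
  rewrite !modlast_rcons lastb_rcons lastv_rcons /= => Ho /andP [Hb Hv].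
  move: Hb Ho; case: b => // _ Ho.
  have Hv0 : 0 < v by move: Ho; rewrite ov_rcons => /and4P [_ _ ? _].
  split; [ | by rewrite lastb_rcons | by rewrite prednK].
  move: Ho; rewrite !ov_rcons /=; case: s' => [|x s'] /=; first lia.
  move=> /and4P [/andP [-> Hl] -> _ H] /=.
  by move: Hl H; rewrite /ov_rel; case: (last x s') => a c /=; lia.
- case: (lastP s) => [|s' [v b]] //.
  rewrite !modlast_rcons lastb_rcons lastv_rcons /= => Ho Hb.
  move: Ho Hb; case: b => // Ho _.
  have Hv0 : 0 < v by move: Ho; rewrite ov_rcons => /and4P [_ _ ? _].
  split; [ | by rewrite lastb_rcons ?lastv_rcons /=; lia | by []].
  move: Ho; rewrite !ov_rcons /=; case: s' => [|x s'] /=; first lia.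
  move=> /and4P [/andP [-> Hl] -> _ H] /=.
  by move: Hl H; rewrite /ov_rel; case: (last x s') => a c /=; lia.
Qed.


Lemma F1 n : 0 < n ->
  abar 2 n + count (fun s => mult_smallest s == 1) (ovs n) = pbar n.
Proof.
move=> Hn; rewrite /abar /pbar.
rewrite (@eq_in_count _ _ (predC (fun s => mult_smallest s == 1))).
  by rewrite addnC count_predC.
move=> s; rewrite ovP => Hs /=; by case: (mult_smallest s) (ms_pos Hn Hs) => [|[|m]].
Qed.

Lemma F2 n : count (fun s => mult_smallest s == 1) (ovs n) = 2 * count lastb (ovs n).
Proof.
rewrite (@count_split _ _ lastb) tog_bij.
have -> : count (fun x => (mult_smallest x == 1) && lastb x) (ovs n) = count lastb (ovs n).
  apply: eq_in_count => s; rewrite ovP => Hs /=; case Hl: (lastb s); last by rewrite andbF.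
  by rewrite (ms_one_of_bar Hs Hl).
lia.
Qed.

Lemma F3 N : ubar N = count (fun s => lastb s && cond3 s) (ovs N).
Proof.
apply: eq_in_count => s; rewrite ovP => Hs /=; rewrite /ubar_cond.
case Hl: (lastb s); last by rewrite /lastb in Hl; rewrite Hl /= !andbF.
rewrite /lastb in Hl; rewrite Hl (no_plain1_of_bar Hs Hl).
by rewrite (eqP (ms_one_of_bar Hs Hl)) /=; case: s {Hs Hl} => [|x [|y s]].
Qed.

Lemma F4 n : 0 < n ->
  count lastb (ovs n.+1) = ubar n.+1 + count lastb (ovs n).
Proof.
move=> Hn; rewrite F3 -(head_bij Hn) (@count_split _ lastb cond3 (ovs n.+1)).
congr (_ + _); apply: eq_count => s /=; exact: andbC.
Qed.

Lemma F5 n : pbar n.+1 = count lastb (ovs n.+1) + pbar n + count lastb (ovs n).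
Proof.
rewrite /pbar -(count_predC lastb (ovs n.+1)) -count_predT -(bar_bij n) -(plain_bij n).
rewrite -addnA; congr (_ + _).
rewrite (@count_split _ (predC lastb) (fun s => lastv s == 1) (ovs n.+1)).
by congr (_ + _); apply: eq_count.
Qed.

Import GRing.Theory.
Local Open Scope ring_scope.

Theorem theorem5p1 (n : nat) : (1 <= n)%N ->
  (abar 2 n)%:Z = 2 * (pbar n)%:Z - (pbar n.+1)%:Z + (ubar n.+1)%:Z.
Proof.
move=> Hn.
have h1 := F1 Hn; have h2 := F2 n; have h4 := F4 Hn; have h5 := F5 n.
lia.
Qed.
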